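(* Let $\Phi\in\Gamma_0(\mathbb{E})$ be Legendre and let $C\subseteq\mathbb{E}$ be a closed convex set with $C\cap\operatorname{int}\operatorname{dom}\Phi\neq\emptyset$. Assume that $D_\Phi(x,\cdot)$ is coercive for some $x\in\operatorname{dom}\Phi\cap C$. Then the Bregman projection $y\mapsto\operatorname{proj}_\Phi(y,C)$ is continuous on $\operatorname{int}\operatorname{dom}\Phi$.
   Context: $\mathbb{E}$ is a finite-dimensional Euclidean space; $\Gamma_0(\mathbb{E})$ the proper lsc convex functions $\mathbb{E}\to\mathbb{R}\cup\{+\infty\}$. $\Phi$ is Legendre if it is essentially smooth ($\operatorname{int}\operatorname{dom}\Phi\ne\emptyset$, differentiable there, $\|\nabla\Phi(z^\nu)\|\to\infty$ whenever $\operatorname{int}\operatorname{dom}\Phi\ni z^\nu\to z\in\operatorname{bdry}\operatorname{dom}\Phi$) and essentially strictly convex (strictly convex on every convex subset of $\operatorname{dom}\partial\Phi$). $D_\Phi(z_1,z_2)=\Phi(z_1)-\Phi(z_2)-\langle\nabla\Phi(z_2),z_1-z_2\rangle$ if $z_1\in\operatorname{dom}\Phi$, $z_2\in\operatorname{int}\operatorname{dom}\Phi$, and $+\infty$ otherwise. The Bregman projection onto $C$ is $\operatorname{proj}_\Phi(y,C)=\operatorname{argmin}_{x\in C}D_\Phi(x,y)$. It is known (Bauschke–Borwein) that under the stated assumptions on $C$, for every $y\in\operatorname{int}\operatorname{dom}\Phi$ this argmin is a single point lying in $C\cap\operatorname{int}\operatorname{dom}\Phi$, characterized by $\langle\nabla\Phi(\bar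 z)-\nabla\Phi(y),z-\bar z\rangle\ge0$ for all $z\in C$ (with $\bar z\in C\cap\operatorname{int}\operatorname{dom}\Phi$). A function $h$ is coercive if $h(z)\to\infty$ as $\|z\|\to\infty$. *)

(* Defs.v *)
(* E = R^n (row vectors 'rV[R]_n) with the standard
   inner product; R : realType. *)
From HB Require Import structures.
From mathcomp Require Import all_boot all_order all_algebra.
From mathcomp Require Import all_classical all_reals all_analysis.
Set Implicit Arguments. Unset Strict Implicit. Unset Printing Implicit Defensive.
Import Order.TTheory GRing.Theory Num.Theory.
Import numFieldNormedType.Exports.
Local Open Scope classical_set_scope.
Local Open Scope ring_scope.

Section Defs.
Variables (R : realType) (n : nat).
Notation E := 'rV[R]_n.

Definition dotp (u v : E) : R := \sum_(i < n) u 0 i * v 0 i.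
Definition enorm (u : E) : R := Num.sqrt (dotp u u).

Definition dom (f : E -> \bar R) : set E := [set z | (f z < +oo)%E].

Definition proper_fun (f : E -> \bar R) : Prop :=
  (forall z, f z != -oo%E) /\ (exists z, (f z < +oo)%E).

Definition convex_fun (f : E -> \bar R) : Prop :=
  forall (x y : E) (t : R), 0 <= t -> t <= 1 ->
    (f (t *: x + (1 - t) *: y)%R <= t%:E * f x + (1 - t)%R%:E * f y)%E.

Definition Gamma0 (f : E -> \bar R) : Prop :=
  [/\ proper_fun f, lower_semicontinuous f & convex_fun f].

Definition convex_set_E (S : set E) : Prop :=
  forall x y (t : R), S x -> S y -> 0 <= t -> t <= 1 -> S (t *: x + (1 - t) *: y).

Definition strictly_convex_on (f : E -> \bar R) (S : set E) : Prop :=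
  forall x y (t : R), S x -> S y -> x != y -> 0 < t -> t < 1 ->
    (f (t *: x + (1 - t) *: y)%R < t%:E * f x + (1 - t)%R%:E * f y)%E.

(* real part of f (meaningful on dom f) *)
Definition freal (f : E -> \bar R) : E -> R := fun z => fine (f z).

(* gradient: the vector representing the Frechet derivative w.r.t. dotp *)
Definition grad (f : E -> \bar R) (z : E) : E :=
  \row_(i < n) ('d (freal f) z) (delta_mx 0 i).

Definition subdiff (f : E -> \bar R) (z : E) : set E :=
  [set g | f z \is a fin_num /\
           forall y, (f z + (dotp g (y - z)%R)%:E <= f y)%E].
Definition dom_subdiff (f : E -> \bar R) : set E :=
  [set z | exists g, subdiff f z g].

Definition boundary (S : set E) : set E := closure S `\` interior S.

Definition essentially_smooth (f : E -> \bar R) : Prop :=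
  [/\ interior (dom f) !=set0,
      (forall z, interior (dom f) z -> differentiable (freal f) z) &
      (forall (u : nat -> E) (z : E), (forall k, interior (dom f) (u k)) ->
         u @ \oo --> z -> boundary (dom f) z ->
         (fun k => enorm (grad f (u k))) @ \oo --> +oo)].

Definition essentially_strictly_convex (f : E -> \bar R) : Prop :=
  forall S, S `<=` dom_subdiff f -> convex_set_E S -> strictly_convex_on f S.

Definition Legendre (f : E -> \bar R) : Prop :=
  essentially_smooth f /\ essentially_strictly_convex f.

Definition bregman (f : E -> \bar R) (z1 z2 : E) : \bar R :=
  if `[< dom f z1 /\ interior (dom f) z2 >] then
    (f z1 - f z2 - (dotp (grad f z2) (z1 - z2)%R)%:E)%E
  else +oo%E.

Definition is_bregman_proj (f : E -> \bar R) (C : set E) (y p : E) : Prop :=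
  C p /\ forall x, C x -> (bregman f p y <= bregman f x y)%E.

Definition coercive (h : E -> \bar R) : Prop :=
  forall M : R, exists r : R, forall z, r < enorm z -> (M%:E < h z)%E.

End Defs.

(* Main.v *)
Require Import Defs.
From HB Require Import structures.
From mathcomp Require Import all_boot all_order all_algebra.
From mathcomp Require Import all_classical all_reals all_analysis.
From mathcomp Require Import ring lra.
Import Order.TTheory GRing.Theory Num.Theory.
Import numFieldNormedType.Exports.
Local Open Scope classical_set_scope.
Local Open Scope ring_scope.
Set Implicit Arguments. Unset Strict Implicit.
Section Basics.
Variables (R : realType) (n : nat).
Local Notation E := 'rV[R]_n.
Implicit Types u v w : E.

Lemma dotpC u v : dotp u v = dotp v u.
Proof. by apply: eq_bigr => i _; rewrite mulrC. Qed.

Lemma dotpDr u v w : dotp u (v + w) = (dotp u v + dotp u w)%R.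
Proof. by rewrite /dotp -big_split; apply: eq_bigr => i _; rewrite mxE mulrDr. Qed.

Lemma dotpZr u v (a : R) : dotp u (a *: v) = (a * dotp u v)%R.
Proof. by rewrite /dotp mulr_sumr; apply: eq_bigr => i _; rewrite mxE mulrCA. Qed.

Lemma dotpNr u v : dotp u (- v) = (- dotp u v)%R.
Proof. by rewrite -scaleN1r dotpZr mulN1r. Qed.

Lemma dotpBr u v w : dotp u (v - w) = (dotp u v - dotp u w)%R.
Proof. by rewrite dotpDr dotpNr. Qed.

Lemma dotpDl u v w : dotp (v + w) u = (dotp v u + dotp w u)%R.
Proof. by rewrite dotpC dotpDr !(dotpC u). Qed.

Lemma dotpZl u v (a : R) : dotp (a *: v) u = (a * dotp v u)%R.
Proof. by rewrite dotpC dotpZr dotpC. Qed.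

Lemma dotpNl u v : dotp (- v) u = (- dotp v u)%R.
Proof. by rewrite dotpC dotpNr dotpC. Qed.

Lemma dotpBl u v w : dotp (v - w) u = (dotp v u - dotp w u)%R.
Proof. by rewrite dotpDl dotpNl. Qed.

Lemma dotp_delta u i : dotp u (delta_mx 0 i) = u 0 i.
Proof.
rewrite /dotp (bigD1 i) //= big1 ?addr0; first by rewrite mxE !eqxx mulr1.
by move=> j ji; rewrite mxE (negbTE ji) andbF mulr0.
Qed.

Lemma entry_le_norm u i : (`|u 0 i| <= `|u|)%R.
Proof.
rewrite [X in (_ <= X)%R]mx_normrE.
exact: (le_bigmax 0%R (fun ij : 'I_1 * 'I_n => `|u ij.1 ij.2|) (0, i)).
Qed.


Lemma norm_le_entries u (c : R) : (0 <= c)%R -> (forall i, `|u 0 i| <= c)%R -> (`|u| <= c)%R.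
Proof.
move=> c0 H; rewrite [X in (X <= _)%R]mx_normrE; apply: bigmax_le => // -[a i] _ /=.
by rewrite (ord1 a).
Qed.

Lemma dotp_bound u v : (`|dotp u v| <= n%:R * `|u| * `|v|)%R.
Proof.
rewrite /dotp; apply: le_trans (ler_norm_sum _ _ _) _.
apply: le_trans (_ : \sum_(i < n) `|u| * `|v| <= _)%R.
  by apply: ler_sum => i _; rewrite normrM ler_pM ?entry_le_norm.
by rewrite sumr_const card_ord -mulrA mulr_natl.
Qed.

Lemma norm_le_enorm u : (`|u| <= enorm u)%R.
Proof.
apply: norm_le_entries; first exact: sqrtr_ge0.
move=> i; rewrite -(sqrtr_sqr (u 0 i)) ler_sqrt /dotp; last first.
  by apply: sumr_ge0 => j _; rewrite -expr2 sqr_ge0.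
rewrite (bigD1 i) //= -expr2 lerDl; apply: sumr_ge0 => j _.
by rewrite -expr2 sqr_ge0.
Qed.

Lemma enorm_le u : (enorm u <= n%:R * `|u|)%R.
Proof.
rewrite /enorm -(@ger0_norm _ (n%:R * _)) ?mulr_ge0 //.
rewrite -sqrtr_sqr ler_sqrt ?sqr_ge0 // /dotp.
apply: le_trans (_ : \sum_(i < n) `|u|^+2 <= _)%R.
  by apply: ler_sum => i _; rewrite -expr2 -real_normK ?num_real // lerXn2r ?nnegrE ?entry_le_norm.
rewrite sumr_const card_ord exprMn -[_ *+ n]mulr_natl ler_wpM2r ?sqr_ge0 //.
by rewrite expr2 -natrM ler_nat; case: n => // m; rewrite leq_pmulr.
Qed.
End Basics.
Section Deriv.
Variables (R : realType) (n : nat).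
Local Notation E := 'rV[R]_n.

Lemma dquot_cvg (F : E -> R) z v : differentiable F z ->
  (fun t : R => t^-1 * (F (t *: v + z) - F z)) @ 0^'+ --> 'd F z v.
Proof.
move=> Hd; have hd := diff_derivable (v:=v) Hd.
rewrite -deriveE //; exact: cvg_dnbhs_at_right hd.
Qed.

Lemma dquot_le (F : E -> R) z v c : differentiable F z ->
  (forall t : R, 0 < t -> t <= 1 -> t^-1 * (F (t *: v + z) - F z) <= c) ->
  'd F z v <= c.
Proof.
move=> Hd H; rewrite -(cvg_lim _ ((dquot_cvg (v:=v) Hd))) //.
apply: limr_le; first exact: cvgP ((dquot_cvg (v:=v) Hd)).
near=> t; apply: H; near: t; [exact: nbhs_right_gt | exact: nbhs_right_le].
Unshelve. all: by end_near.
Qed.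

Lemma dquot_ge (F : E -> R) z v c : differentiable F z ->
  (forall t : R, 0 < t -> t <= 1 -> c <= t^-1 * (F (t *: v + z) - F z)) ->
  c <= 'd F z v.
Proof.
move=> Hd H; rewrite -(cvg_lim _ ((dquot_cvg (v:=v) Hd))) //.
apply: limr_ge; first exact: cvgP ((dquot_cvg (v:=v) Hd)).
near=> t; apply: H; near: t; [exact: nbhs_right_gt | exact: nbhs_right_le].
Unshelve. all: by end_near.
Qed.
End Deriv.

Lemma transl_cvg (R : realType) n (p w0 : 'rV[R]_n) : (fun w : 'rV[R]_n => w - p) @ w0 --> w0 - p.
Proof.
apply: (@cvgB _ _ _ _ (nbhs_filter w0)); first exact: cvg_id.
exact: (@cvg_cst _ _ _ _ (nbhs_filter w0)).
Qed.
Lemma norm_transl_cont (R : realType) n (p : 'rV[R]_n) : continuous (fun w : 'rV[R]_n => `|w - p|).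
Proof.
move=> w0; apply: (@cvg_norm _ _ _ _ (nbhs_filter w0)); exact: transl_cvg.
Qed.
Lemma comp_transl_cont (R : realType) n (p : 'rV[R]_n) (L : 'rV[R]_n -> R) : continuous L -> continuous (fun w : 'rV[R]_n => L (w - p)).
Proof.
move=> hL w0; apply: (cvg_comp (fun w => w - p) L); last exact: hL.
exact: transl_cvg.
Qed.
Lemma sphere_bounded (R : realType) n (p : 'rV[R]_n) (e : R) : 0 < e -> bounded_set [set w : 'rV[R]_n | `|w - p| = e].
Proof.
move=> e0; rewrite /bounded_near.
apply: filterS (nbhs_pinfty_ge (num_real (`|p| + e))) => M hM w /= hw.
apply: le_trans hM.
by rewrite -hw -{1}(subrK p w) addrC ler_normD.
Qed.

Section Func.
Variables (R : realType) (n : nat) (f : 'rV[R]_n -> \bar R).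
Hypothesis Hprop : proper_fun f.
Hypothesis Hconv : convex_fun f.
Hypothesis Hdiff : forall z : 'rV[R]_n, interior (dom f) z -> differentiable (freal f) z.
Local Notation F := (freal f).
Local Notation I := (interior (dom f)).

Lemma fin_dom (z : 'rV[R]_n) : dom f z -> f z = (F z)%:E.
Proof.
rewrite /dom /= => hz; rewrite /freal fineK // fin_numE (Hprop.1 z) /=.
by rewrite (lt_eqF hz).
Qed.

Lemma I_dom (z : 'rV[R]_n) : I z -> dom f z.
Proof. exact: interior_subset. Qed.

Lemma dom_convex : convex_set_E (dom f).
Proof.
move=> x y t hx hy t0 t1; have := Hconv x y t0 t1.
rewrite (fin_dom hx) (fin_dom hy) -!EFinM -EFinD => h.
by rewrite /dom /=; exact: le_lt_trans h (ltry _).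
Qed.

Lemma convF (x y : 'rV[R]_n) t : dom f x -> dom f y -> 0 <= t -> t <= 1 ->
  F (t *: x + (1 - t) *: y) <= t * F x + (1 - t) * F y.
Proof.
move=> hx hy t0 t1; have := Hconv x y t0 t1.
by rewrite (fin_dom (dom_convex hx hy t0 t1)) (fin_dom hx) (fin_dom hy)
  -!EFinM -EFinD lee_fin.
Qed.

Fact grad_key : unit. Proof. exact: tt. Qed.
Definition gr := locked_with grad_key (grad f).
Lemma grE : grad f = gr. Proof. by rewrite /gr unlock. Qed.

Lemma grad_dotp (z v : 'rV[R]_n) : dotp (gr z) v = 'd F z v.
Proof.
rewrite -grE [in RHS](row_sum_delta v) linear_sum /dotp; apply: eq_bigr => i _.
by rewrite linearZ /= mxE mulrC.
Qed.

Lemma SG (z w : 'rV[R]_n) : I z -> dom f w -> F z + dotp (gr z) (w - z) <= F w.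
Proof.
move=> hz hw; rewrite grad_dotp -lerBrDl.
apply: dquot_le (Hdiff hz) _ => t t0 t1.
have := convF hw (I_dom hz) (ltW t0) t1.
have -> : t *: (w - z) + z = t *: w + (1 - t) *: z.
  by rewrite scalerBr scalerBl scale1r addrA addrAC.
move=> h; rewrite mulrC ler_pdivrMr //; lra.
Qed.

Lemma SGe (z w : 'rV[R]_n) : I z -> (f z + (dotp (gr z) (w - z))%:E <= f w)%E.
Proof.
move=> hz; have [hw|hw] := pselect (dom f w).
  by rewrite (fin_dom hw) (fin_dom (I_dom hz)) -EFinD lee_fin SG.
have -> : f w = +oo%E by move: hw; rewrite /dom /= => /negP; rewrite -leNgt leye_eq => /eqP.
exact: leey.
Qed.


Lemma bregman_fin (a y : 'rV[R]_n) : dom f a -> I y ->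
  bregman f a y = (F a - F y - dotp (gr y) (a - y))%:E.
Proof.
move=> ha hy; rewrite /bregman grE asboolT; last by split.
by rewrite (fin_dom ha) (fin_dom (I_dom hy)) -!EFinB.
Qed.

Lemma bregman_ge0 (a y : 'rV[R]_n) : I y -> (0 <= bregman f a y)%E.
Proof.
move=> hy; have [ha|ha] := pselect (dom f a); last first.
  by rewrite /bregman asboolF ?leey // => -[].
rewrite bregman_fin // lee_fin; have := SG hy ha.
set u := dotp _ _; move=> h; rewrite subr_ge0 lerBrDl; exact: h.
Qed.

Variable C : set 'rV[R]_n.
Hypothesis Cconv : convex_set_E C.

Definition isproj (y p : 'rV[R]_n) := C p /\ forall x, C x -> (bregman f p y <= bregman f x y)%E.

Lemma VI (y p z : 'rV[R]_n) : I y -> I p -> isproj y p -> C z -> dom f z ->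
  0 <= dotp (gr p - gr y) (z - p).
Proof.
move=> hy hp [Cp Hmin] Cz hz; rewrite dotpBl grad_dotp subr_ge0.
apply: dquot_ge (Hdiff hp) _ => t t0 t1.
have e : t *: (z - p) + p = t *: z + (1 - t) *: p.
  by rewrite scalerBr scalerBl scale1r addrA addrAC.
have Czt : C (t *: (z - p) + p) by rewrite e; apply: Cconv => //; exact: ltW.
have dzt : dom f (t *: (z - p) + p) by rewrite e; apply: dom_convex => //; [exact: I_dom|exact: ltW].
have := Hmin _ Czt; rewrite !bregman_fin //; last exact: I_dom.
rewrite lee_fin !dotpBr !dotpDr dotpZr !dotpBr => h.
rewrite mulrC ler_pdivlMr //; lra.
Qed.


Lemma alg_core (Fu Fp Fw X a t sr : R) : 0 < t -> t <= 1 ->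
  Fu - t * X <= Fp -> Fp + t * a <= Fu -> Fu + (1 - t) * X + sr <= Fw ->
  sr <= Fw - Fp - a.
Proof.
move=> t0 t1 h1 h2 h3.
have hX : a <= X by rewrite -(ler_pM2l t0); lra.
have : (1 - t) * a <= (1 - t) * X by rewrite ler_wpM2l // subr_ge0.
lra.
Qed.

Lemma norm_delta (a : R) (i : 'I_n) : `|a *: (delta_mx 0 i : 'rV[R]_n)| <= `|a|.
Proof.
apply: norm_le_entries => // j; rewrite !mxE normrM.
by case: (_ && _); rewrite ?normr1 ?normr0 ?mulr1 ?mulr0.
Qed.

Lemma eq_rowE (a b : 'rV[R]_n) : (forall i, a 0 i = b 0 i) -> a = b.
Proof. by move=> h; apply/rowP => i; rewrite h. Qed.

Lemma IL (y p : 'rV[R]_n) :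
  (forall (u : nat -> 'rV[R]_n) (z : 'rV[R]_n), (forall k, I (u k)) ->
         u @ \oo --> z -> boundary (dom f) z ->
         (fun k => enorm (grad f (u k))) @ \oo --> +oo) ->
  I y -> isproj y p -> (exists c, C c /\ I c) -> I p.
Proof.
move=> Hes hy [Cp Hmin] [c [Cc hc]].
have hp : dom f p.
  have := Hmin c Cc; rewrite (bregman_fin (I_dom hc) hy) /bregman.
  case: asboolP => [[]//|_]; by rewrite leNgt ltey.
have [//|np] := pselect (I p); exfalso.
have bp : boundary (dom f) p by split => //; exact: subset_closure.
have hc' := hc; move: hc' => /nbhs_ballP [rho rho0 Hball].
pose v := c - p.
pose u := fun k : nat => harmonic k *: v + p.
have t0 : forall k : nat, 0 < harmonic k :> R by move=> k; rewrite /harmonic /= invr_gt0.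
have t1 : forall k : nat, harmonic k <= 1 :> R.
  by move=> k; rewrite /harmonic /= invf_le1 // ler1n.
have uI : forall k, I (u k).
  move=> k; apply/nbhs_ballP; exists (harmonic k * rho); first by rewrite /= mulr_gt0.
  have tk0 := t0 k; have tk1 := t1 k.
  move=> w; rewrite -ball_normE /ball_ => hw.
  set t := harmonic k in tk0 tk1 hw *.
  have tn0 : t != 0 by rewrite gt_eqF.
  pose w' := c + t^-1 *: (w - u k).
  have hw' : dom f w'.
    apply: Hball; rewrite -ball_normE /= /w' opprD addNKr normrN normrZ.
    rewrite gtr0_norm ?invr_gt0 // distrC ltr_pdivrMl //.
  have -> : w = t *: w' + (1 - t) *: p.
    apply: eq_rowE => i; rewrite /w' /u /v -/t !mxE; field; exact: tn0.
  exact: (dom_convex hw' hp (ltW tk0) tk1).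
have ucv : u @ \oo --> p.
  rewrite -[p]add0r; apply: cvgD; last exact: cvg_cst.
  rewrite -(scale0r v); apply: cvgZ; [exact: cvg_harmonic | exact: cvg_cst].
have := Hes u p uI ucv bp; rewrite grE.
pose r := rho / 2.
have r0 : 0 < r by rewrite divr_gt0.
pose a := dotp (gr y) v.
pose wp := fun (s : R) (i : 'I_n) => c + (s * r) *: (delta_mx 0 i : 'rV[R]_n).
have hw : forall (s : R) i, `|s| <= 1 -> dom f (wp s i).
  move=> s i hs; apply: Hball; rewrite -ball_normE /= /wp opprD addrA subrr add0r normrN.
  apply: le_lt_trans (norm_delta _ _) _; rewrite normrM (gtr0_norm r0).
  apply: le_lt_trans (_ : 1 * r < rho); first by rewrite ler_wpM2r // ltW.
  by rewrite mul1r /r ltr_pdivrMr // ltr_pMr // ltr1n.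
pose A := fun s i => F (wp s i) - F p - a.
pose K := \sum_(i < n) (`|A 1 i| + `|A (-1) i|) / r.
have K0 : 0 <= K by apply: sumr_ge0 => i _; rewrite divr_ge0 ?addr_ge0 ?(ltW r0).
have bound : forall k i, `|gr (u k) 0 i| <= K.
  move=> k i.
  have tk0 := t0 k; have tk1 := t1 k.
  have hu : dom f (u k) by exact: I_dom.
  have h1 := SG (uI k) hp.
  have h2 : F p + harmonic k * a <= F (u k).
    have Cu : C (u k).
      have -> : u k = harmonic k *: c + (1 - harmonic k) *: p.
        by apply: eq_rowE => j; rewrite /u /v !mxE; ring.
      exact: (Cconv Cc Cp (ltW tk0) tk1).
    have := Hmin _ Cu; rewrite !bregman_fin //.
    rewrite lee_fin /u /a /v !dotpBr !dotpDr !dotpZr !dotpBr; lra.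
  have key : forall s, `|s| <= 1 -> s * r * gr (u k) 0 i <= A s i.
    move=> s hs; have h3 := SG (uI k) (hw s i hs).
    apply: (@alg_core (F (u k)) (F p) (F (wp s i)) (dotp (gr (u k)) v) a (harmonic k)) => //.
      move: h1; rewrite (_ : p - u k = - (harmonic k *: v)); last first.
        by apply: eq_rowE => j; rewrite /u /v !mxE; ring.
      rewrite dotpNr dotpZr; lra.
    move: h3; rewrite (_ : wp s i - u k = (1 - harmonic k) *: v + (s * r) *: delta_mx 0 i); last first.
      by apply: eq_rowE => j; rewrite /u /v /wp !mxE; ring.
    by rewrite dotpDr !dotpZr dotp_delta mulrA addrA.
  have kp : 1 * r * gr (u k) 0 i <= A 1 i by apply: key; rewrite normr1.
  have km : -1 * r * gr (u k) 0 i <= A (-1) i by apply: key; rewrite normrN normr1.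
  apply: le_trans (_ : (`|A 1 i| + `|A (-1) i|) / r <= K); last first.
    rewrite /K (bigD1 i) //= lerDl; apply: sumr_ge0 => j _.
    by rewrite divr_ge0 ?addr_ge0 ?(ltW r0).
  rewrite ler_pdivlMr // mulrC -[X in X * _](gtr0_norm r0) -normrM.
  rewrite mul1r in kp; rewrite mulN1r mulNr in km.
  have n1 := ler_norm (A 1 i); have n3 := ler_norm (A (-1) i).
  have n5 := normr_ge0 (A 1 i); have n6 := normr_ge0 (A (-1) i).
  rewrite ler_norml; apply/andP; split; lra.
move=> /cvgryPge /(_ (n%:R * K + 1)) /filter_ex [k hk].
have : enorm (gr (u k)) <= n%:R * K.
  apply: le_trans (enorm_le _) _; rewrite ler_wpM2l //.
  by apply: norm_le_entries.
lra.
Qed.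

Lemma I_near (y : 'rV[R]_n) : I y -> \forall y' \near y, I y'.
Proof. by move=> hy; apply: nbhs_interior. Qed.

Lemma GC1 (y : 'rV[R]_n) (i : 'I_n) (s : R) : I y -> forall e, 0 < e ->
  \forall y' \near y, s * gr y' 0 i <= s * gr y 0 i + e.
Proof.
move=> hy e e0.
pose v : 'rV[R]_n := s *: delta_mx 0 i.
have Hd := Hdiff hy.
have hq := dquot_cvg (v:=v) Hd.
have dv : 'd F y v = s * gr y 0 i by rewrite -grad_dotp dotpZr dotp_delta.
rewrite dv in hq.
have hc : (fun h : R => h *: v + y) @ 0^'+ --> y.
  apply: cvg_at_right_filter; rewrite -[X in _ --> X]add0r; apply: cvgD; last exact: cvg_cst.
  rewrite -(scale0r v); apply: cvgZ; [by move=> A hA | exact: cvg_cst].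
have Hq : \forall h \near 0^'+, h^-1 * (F (h *: v + y) - F y) < s * gr y 0 i + e / 2.
  have H0 := (@cvgrPdist_lt _ _ _ _ (at_right_proper_filter (0:R)) _ _).1 hq (e / 2) (divr_gt0 e0 (ltr0Sn _ _)).
  apply: filterS H0 => h /=.
  by rewrite ltr_norml => /andP [a b]; lra.
have : \forall h \near 0^'+, [/\ 0 < h, I (h *: v + y) &
     h^-1 * (F (h *: v + y) - F y) < s * gr y 0 i + e / 2].
  near=> h; split.
  - near: h; exact: nbhs_right_gt.
  - near: h; exact: hc (I_near hy).
  - by near: h.
move=> /filter_ex [h [h0 hI hh]].
rewrite mulrC ltr_pdivrMr // in hh.
have c1 : (fun y' => F (y' + h *: v)) @ y --> F (h *: v + y).
  apply: (@cvg_comp _ _ _ (fun y' => y' + h *: v) F (nbhs y) (nbhs (h *: v + y))).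
    rewrite addrC; apply: cvgD; [by move=> A hA | exact: cvg_cst].
  exact: differentiable_continuous (Hdiff hI).
have c2 : F @ y --> F y by exact: differentiable_continuous Hd.
have he : 0 < h * e / 4 by rewrite divr_gt0 ?mulr_gt0.
have H1 := (cvgrPdist_lt _ _).1 c1 _ he.
have H2 := (cvgrPdist_lt _ _).1 c2 _ he.
near=> y'.
have hy' : I y' by near: y'; exact: I_near.
have w1 : `|F (h *: v + y) - F (y' + h *: v)| < h * e / 4.
  by near: y'; exact: H1.
have w2 : `|F y - F y'| < h * e / 4.
  by near: y'; exact: H2.
have hw' : dom f (y' + h *: v).
  near: y'; move: hI => /nbhs_ballP [d d0 Hb].
  apply/nbhs_ballP; exists d => // z; rewrite -ball_normE /ball_ => hz.
  apply: Hb; rewrite -ball_normE /ball_.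
  rewrite /= (_ : h *: v + y - (z + h *: v) = y - z) //.
  by apply: eq_rowE => j; rewrite !mxE; ring.
have sg := SG hy' hw'.
rewrite (_ : y' + h *: v - y' = h *: v) in sg; last by rewrite addrC addKr.
rewrite dotpZr dotpZr dotp_delta in sg.
move: w1 w2; rewrite !ltr_norml => /andP [w1a w1b] /andP [w2a w2b].
rewrite -(ler_pM2l h0); lra.
Unshelve. all: by end_near.
Qed.

Lemma GC (y : 'rV[R]_n) : I y -> forall e, 0 < e ->
  \forall y' \near y, `|gr y' - gr y| <= e.
Proof.
move=> hy e e0.
have H1 : \forall y' \near y, forall i, gr y' 0 i <= gr y 0 i + e.
  apply: (filter_forall (F := nbhs y) (f := fun i (y' : 'rV[R]_n) => gr y' 0 i <= gr y 0 i + e)) => i.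
  apply: filterS (GC1 i 1 hy e0) => z.
  by rewrite !mul1r.
have H2 : \forall y' \near y, forall i, - gr y' 0 i <= - gr y 0 i + e.
  apply: (filter_forall (F := nbhs y) (f := fun i (y' : 'rV[R]_n) => - gr y' 0 i <= - gr y 0 i + e)) => i.
  apply: filterS (GC1 i (-1) hy e0) => z.
  by rewrite !mulN1r.
apply: filterS2 H1 H2 => z h1 h2; apply: norm_le_entries (ltW e0) _ => i.
rewrite !mxE ler_norml; apply/andP; split; [have := h2 i | have := h1 i]; lra.
Qed.

Lemma PS (p : 'rV[R]_n) : essentially_strictly_convex f -> I p ->
  exists2 e0, 0 < e0 & forall e, 0 < e -> e <= e0 ->
  exists2 m, 0 < m & forall w, e <= `|w - p| -> (m%:E <= bregman f w p)%E.
Proof.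
move=> Hesc hp; have [rho rho0 Hb] := (nbhs_ballP _ _).1 (I_near hp).
exists (rho / 2); first by rewrite divr_gt0.
move=> e e0 ele.
have clI : forall z, `|z - p| <= e -> I z.
  move=> z hz; apply: Hb; rewrite -ball_normE /ball_ /= distrC.
  apply: le_lt_trans hz _; apply: le_lt_trans ele _.
  by rewrite ltr_pdivrMr // ltr_pMr // ltr1n.
pose S := [set w : 'rV[R]_n | `|w - p| = e].
pose h := fun w => F w - F p - dotp (gr p) (w - p).
have hge0 : forall w, dom f w -> 0 <= h w.
  by move=> w hw; have := SG hp hw; rewrite /h; lra.
have proj : forall w, e <= `|w - p| -> dom f w -> exists u, S u /\ h u <= h w.
  move=> w hw dw.
  have wp0 : 0 < `|w - p| by apply: lt_le_trans hw.
  pose t := e / `|w - p|.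
  have t0 : 0 <= t by rewrite divr_ge0 // ltW.
  have t1 : t <= 1 by rewrite ler_pdivrMr // mul1r.
  exists (t *: w + (1 - t) *: p).
  have eu : t *: w + (1 - t) *: p - p = t *: (w - p).
    by apply: eq_rowE => j; rewrite !mxE; ring.
  split.
    rewrite /S /= eu normrZ ger0_norm // /t -mulrA mulVf ?mulr1 //.
    by rewrite gt_eqF.
  have cv := convF dw (I_dom hp) t0 t1.
  have := hge0 w dw; rewrite /h eu dotpZr => hw0.
  have : 0 <= (1 - t) * (F w - F p - dotp (gr p) (w - p)).
    by rewrite mulr_ge0 // subr_ge0.
  lra.
have Dinf : forall w, ~ dom f w -> bregman f w p = +oo%E.
  by move=> w dw; rewrite /bregman asboolF // => -[].
have [Sne|Se] := pselect (S !=set0); last first.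
  exists 1 => // w hw; have [dw|dw] := pselect (dom f w); last by rewrite Dinf // leey.
  by have [u [Su _]] := proj w hw dw; exfalso; apply: Se; exists u.
have cS : compact S.
  apply: bounded_closed_compact; first exact: sphere_bounded.
  apply: (@preimage_closed _ _ (fun w : 'rV[R]_n => `|w - p|) [set x | x = e]).
    by move=> z _; exact: norm_transl_cont.
  exact: closed_eq.
have contS : {within S, continuous h}.
  apply: continuous_in_subspaceT => z; rewrite inE /S /= => Sz.
  have Iz : I z by apply: clI; rewrite Sz.
  have eqh : h = (fun w => F w - F p - 'd F p (w - p)).
    by apply: funext => w; rewrite /h grad_dotp.
  rewrite eqh; apply: (@cvgB _ _ _ _ (nbhs_filter z)).
    apply: (@cvgB _ _ _ _ (nbhs_filter z)).
      exact: differentiable_continuous (Hdiff Iz).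
    exact: (@cvg_cst _ _ _ _ (nbhs_filter z)).
  apply: comp_transl_cont; exact: diff_continuous (Hdiff hp).
have [c cS' cmin] := EVT_min_rV Sne cS contS.
move: cS'; rewrite inE /S /= => Sc.
have Ic : I c by apply: clI; rewrite Sc.
exists (h c).
  pose B := [set z : 'rV[R]_n | `|z - p| <= e].
  have Bconv : convex_set_E B.
    move=> a b t Ba Bb t0 t1; rewrite /B /=.
    have -> : t *: a + (1 - t) *: b - p = t *: (a - p) + (1 - t) *: (b - p).
      by apply: eq_rowE => j; rewrite !mxE; ring.
    apply: le_trans (ler_normD _ _) _; rewrite !normrZ !ger0_norm ?subr_ge0 //.
    have : t * `|a - p| <= t * e by rewrite ler_wpM2l.
    have : (1 - t) * `|b - p| <= (1 - t) * e by rewrite ler_wpM2l // subr_ge0.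
    lra.
  have Bsub : B `<=` dom_subdiff f.
    move=> z Bz; have Iz := clI z Bz; exists (gr z); split.
      by rewrite (fin_dom (I_dom Iz)).
    move=> w; exact: SGe.
  have sc := Hesc B Bsub Bconv.
  have cp : c != p.
    apply/eqP => ecp; move: Sc; rewrite ecp subrr normr0 => e0'.
    by rewrite e0' ltxx in e0.
  have Bc : B c by rewrite /B /= Sc.
  have Bp : B p by rewrite /B /= subrr normr0 ltW.
  have h2 : 0 < 2^-1 :> R by rewrite invr_gt0.
  have h21 : 2^-1 < 1 :> R by rewrite invf_lt1 // ltr1n.
  have := sc c p 2^-1 Bc Bp cp h2 h21.
  have Bm : B (2^-1 *: c + (1 - 2^-1) *: p).
    by apply: Bconv => //; exact: ltW.
  rewrite (fin_dom (I_dom (clI _ Bm))) (fin_dom (I_dom Ic)) (fin_dom (I_dom hp)).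
  rewrite -!EFinM -EFinD lte_fin => hsc.
  have := SG hp (I_dom (clI _ Bm)).
  have -> : 2^-1 *: c + (1 - 2^-1) *: p - p = 2^-1 *: (c - p).
    by apply: eq_rowE => j; rewrite !mxE; ring.
  rewrite dotpZr /h; lra.
move=> w hw; have [dw|dw] := pselect (dom f w); last by rewrite Dinf // leey.
rewrite bregman_fin // lee_fin.
have [u [Su hu]] := proj w hw dw.
apply: le_trans (hu); apply: cmin; rewrite inE; exact: Su.
Qed.

Lemma norm_tri (a b : 'rV[R]_n) : `|a| <= `|b| + `|a - b|.
Proof. by rewrite -{1}(subrK b a) addrC ler_normD. Qed.

Lemma main_near (P : 'rV[R]_n -> 'rV[R]_n) :
  essentially_strictly_convex f ->
  (forall (u : nat -> 'rV[R]_n) (z : 'rV[R]_n), (forall k, I (u k)) ->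
         u @ \oo --> z -> boundary (dom f) z ->
         (fun k => enorm (grad f (u k))) @ \oo --> +oo) ->
  (exists c, C c /\ I c) ->
  (exists x, dom f x /\ C x /\ coercive (bregman f x)) ->
  (forall y, I y -> isproj y (P y)) ->
  forall y, I y -> forall eps, 0 < eps -> \forall y' \near y, `|P y' - P y| < eps.
Proof.
move=> Hesc Hes Hc [x [dx [Cx Hco]]] HP y hy eps eps0.
set p := P y.
have hpp := HP y hy.
have Ip : I p := IL Hes hy hpp Hc.
have [e0 e00 HPS] := PS Hesc Ip.
have [e [e0p [ele0 eleps]]] : exists e, [/\ 0 < e, e <= e0 & e <= eps].
  by case: (lerP eps e0) => h; [exists eps; split | exists e0; split => //; exact: ltW].
have [m m0 Hm] := HPS e e0p ele0.
pose M := `|F x| + (`|F y| + 1) + n%:R * ((`|gr y| + 1) * (`|x - y| + 1)).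
have [r Hr] := Hco M.
pose K := r + `|p|.
pose e1 := m / (n%:R * `|K| + 1).
have nK1 : 0 < n%:R * `|K| + 1 by rewrite ltr_wpDl // mulr_ge0.
have e10 : 0 < e1 by rewrite divr_gt0.
have he1 : e1 * (n%:R * `|K| + 1) = m by rewrite /e1 -mulrA mulVf ?mulr1 // gt_eqF.
have N2 : \forall y' \near y, `|F y - F y'| < 1.
  exact: (cvgrPdist_lt _ _).1 (differentiable_continuous (Hdiff hy)) 1 ltr01.
have N3 := GC hy ltr01.
have N5 := GC hy e10.
have N4 : \forall y' \near y, `|y - y'| < 1.
  apply/nbhs_ballP; exists 1; first exact: ltr01.
  by move=> z; rewrite -ball_normE.
near=> y'.
have hy' : I y' by near: y'; exact: I_near.
have n2 : `|F y - F y'| < 1 by near: y'; exact: N2.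
have n3 : `|gr y' - gr y| <= 1 by near: y'; exact: N3.
have n4 : `|y - y'| < 1 by near: y'; exact: N4.
have n5 : `|gr y' - gr y| <= e1 by near: y'; exact: N5.
set p' := P y'.
have hpp' := HP y' hy'.
have Ip' : I p' := IL Hes hy' hpp' Hc.
have DxyM : F x - F y' - dotp (gr y') (x - y') <= M.
  have t1 := norm_tri (gr y') (gr y).
  have t2 := norm_tri (x - y') (x - y).
  rewrite (_ : x - y' - (x - y) = y - y') in t2; last first.
    by apply: eq_rowE => j; rewrite !mxE; ring.
  have t3 : `|gr y'| * `|x - y'| <= (`|gr y| + 1) * (`|x - y| + 1).
    by apply: ler_pM => //; lra.
  have t4 := dotp_bound (gr y') (x - y').
  have t5 : n%:R * `|gr y'| * `|x - y'| <= n%:R * ((`|gr y| + 1) * (`|x - y| + 1)).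
    by rewrite -mulrA ler_wpM2l.
  have h1 := ler_norm (F x).
  have h2 : - F y <= `|F y| by rewrite -normrN ler_norm.
  have h3 : - dotp (gr y') (x - y') <= `|dotp (gr y') (x - y')|.
    by rewrite -normrN ler_norm.
  rewrite /M; move: n2; rewrite ltr_norml => /andP [a b].
  lra.
have vi1 := VI hy' Ip' hpp' Cx dx.
have Dpy := SG hy' (I_dom Ip').
have enp : enorm p' <= r.
  rewrite leNgt; apply/negP => /Hr.
  rewrite bregman_fin // lte_fin => hc.
  move: hc vi1 Dpy DxyM; rewrite ?dotpBl ?dotpBr; lra.
have npp : `|p' - p| <= `|K|.
  apply: le_trans (ler_normB _ _) _; apply: le_trans (ler_norm _).
  have := norm_le_enorm p'; rewrite /K; lra.
have vi2 := VI hy Ip hpp (hpp'.1) (I_dom Ip').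
have vi3 := VI hy' Ip' hpp' (hpp.1) (I_dom Ip).
have s1 := SG Ip (I_dom Ip').
have s2 := SG Ip' (I_dom Ip).
have db := dotp_bound (gr y' - gr y) (p' - p).
have bnd : n%:R * `|gr y' - gr y| * `|p' - p| <= n%:R * e1 * `|K|.
  have h := ler_pM (normr_ge0 _) (normr_ge0 _) n5 npp.
  rewrite -[n%:R * _ * _]mulrA -[n%:R * e1 * _]mulrA; exact: ler_wpM2l.
have Dlt : F p' - F p - dotp (gr p) (p' - p) < m.
  have := ler_norm (dotp (gr y' - gr y) (p' - p)).
  move: vi2 vi3 s1 s2 db bnd; rewrite ?dotpBl ?dotpBr.
  lra.
rewrite ltNge; apply/negP => hle.
have := Hm p' (le_trans eleps hle).
rewrite bregman_fin //; last exact: I_dom.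
rewrite lee_fin; lra.
Unshelve. all: by end_near.
Qed.
End Func.

Unset Implicit Arguments.

(* Any selection P of the Bregman projection (which is single-valued on
   int dom Phi) is continuous on int dom Phi. *)
Theorem mainTheorem6 (R : realType) (n : nat) (Phi : 'rV[R]_n -> \bar R)
    (C : set 'rV[R]_n) (P : 'rV[R]_n -> 'rV[R]_n) :
  Gamma0 Phi -> Legendre Phi ->
  closed C -> convex_set_E C -> C `&` interior (dom Phi) !=set0 ->
  (exists x, dom Phi x /\ C x /\ coercive (bregman Phi x)) ->
  (forall y, interior (dom Phi) y -> is_bregman_proj Phi C y (P y)) ->
  {within interior (dom Phi), continuous P}.
Proof.
move=> [Hprop _ Hconv] [[_ Hdiff Hes] Hesc] _ Cconv [c [Cc Ic]] Hx HP.
apply: continuous_in_subspaceT => y; rewrite inE => hy.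
apply/(@cvgrPdist_lt _ _ _ _ (nbhs_filter y)) => eps eps0.
have := main_near Hprop Hconv Hdiff Cconv Hesc Hes (ex_intro _ c (conj Cc Ic)) Hx HP hy eps0.
by apply: filterS => z; rewrite distrC.
Qed.
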